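(* Let $(X,\xi)$ be a probability space, and let $f\in L^1(X,\xi)$ be non-negative. Then there is an increasing $1$-Lipschitz function $\psi:[0,\infty)\to[0,\infty)$ with $\lim_{y\to\infty}\psi(y)=\infty$ such that, setting $\Psi(y)=\int_0^y\psi(z)\,dz$ for $y\ge0$, one has $\Psi(f)\in L^1(X,\xi)$. Moreover, the function $F:[0,\infty)\to[0,\infty)$, $F(y)=\Psi(\log(1+y))$, is increasing and differentiable on $[0,\infty)$, and there exists $M>0$ such that \[ F(y+y')\le F(y)+F(y')+M\quad\text{for all }y,y'\ge0. \] *)

(* Defs.v *)
From HB Require Import structures.
From mathcomp Require Import all_boot all_order all_algebra.
From mathcomp Require Import all_classical all_reals all_analysis.
Set Implicit Arguments. Unset Strict Implicit. Unset Printing Implicit Defensive.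
Import Order.TTheory GRing.Theory Num.Theory.
Import numFieldNormedType.Exports.
Local Open Scope classical_set_scope.
Local Open Scope ring_scope.

Definition Psi_of (R : realType) (psi : R -> R) (y : R) : R :=
  Rintegral lebesgue_measure `[0, y] psi.

Definition F_of (R : realType) (psi : R -> R) (y : R) : R :=
  Psi_of psi (ln (1 + y)).

(* Main.v *)
Require Import Defs.
From HB Require Import structures.
From mathcomp Require Import all_boot all_order all_algebra.
From mathcomp Require Import all_classical all_reals all_analysis.
From mathcomp Require Import ring lra measurable_realfun.
Set Implicit Arguments. Unset Strict Implicit. Unset Printing Implicit Defensive.
Import Order.TTheory GRing.Theory Num.Theory.
Import numFieldNormedType.Exports.
Local Open Scope classical_set_scope.
Local Open Scope ring_scope.

Section PsiCons.
Variable R : realType.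
Variable t : nat -> nat.
Hypothesis tk : forall k, (k <= t k)%N.

Definition mx (a b : R) := if a <= b then b else a.
Definition term (k : nat) (y : R) : R :=
  if y <= (t k)%:R then 0 else if y - (t k)%:R <= k%:R then y - (t k)%:R else k%:R.
Fixpoint psiN (n : nat) (y : R) : R :=
  match n with 0 => 0 | n'.+1 => mx (psiN n' y) (term n' y) end.
Definition psi (y : R) : R := psiN (Num.truncn y).+1 y.

Lemma term_ge0 k y : 0 <= term k y.
Proof.
have k0 : (0:R) <= k%:R := ler0n _ _.
rewrite /term; case: (leP y (t k)%:R) => h1 //.
case: (leP (y - (t k)%:R) k%:R) => h2; lra.
Qed.

Lemma term_le k y : term k y <= (if (t k)%:R < y then k%:R else 0).
Proof.
have k0 : (0:R) <= k%:R := ler0n _ _.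
rewrite /term; case: (leP y (t k)%:R) => h1; first by case: (ltP (t k)%:R y) => h; lra.
case: (ltP (t k)%:R y) => h; last lra. case: (leP (y - (t k)%:R) k%:R) => h2; lra.
Qed.

Lemma term0 k y : y <= k%:R -> term k y = 0.
Proof.
move=> yk; rewrite /term ifT //; apply: (le_trans yk); rewrite ler_nat; exact: tk.
Qed.

Lemma term_lip k y z : y <= z -> term k y <= term k z <= term k y + (z - y).
Proof.
move=> yz; have k0 : (0:R) <= k%:R := ler0n _ _. rewrite /term.
case: (leP y (t k)%:R) => h1; case: (leP z (t k)%:R) => h2; try lra;
  try (case: (leP (y - (t k)%:R) k%:R) => h3); try (case: (leP (z - (t k)%:R) k%:R) => h4); lra.
Qed.

Lemma mx_lip a b a' b' d : a <= a' <= a + d -> b <= b' <= b + d ->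
  mx a b <= mx a' b' <= mx a b + d.
Proof.
move=> /andP[h1 h2] /andP[h3 h4]; rewrite /mx.
case: (leP a b) => h5; case: (leP a' b') => h6; lra.
Qed.

Lemma psiN_ge0 n y : 0 <= psiN n y.
Proof.
elim: n => [|n IH] /=; first exact: lexx.
rewrite /mx; case: (leP (psiN n y) (term n y)) => //; have := term_ge0 n y; lra.
Qed.

Lemma psiN_lip n y z : y <= z -> psiN n y <= psiN n z <= psiN n y + (z - y).
Proof.
move=> yz; elim: n => [|n IH] /=; first lra.
by apply: mx_lip => //; exact: term_lip.
Qed.

Lemma psiN_stable m n y : y <= m%:R -> (m <= n)%N -> psiN n y = psiN m y.
Proof.
move=> ym; elim: n => [|n IH]; first by rewrite leqn0 => /eqP ->.
rewrite leq_eqVlt => /orP[/eqP <- //|]; rewrite ltnS => mn.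
rewrite /= IH // term0; last first.
  by apply: (le_trans ym); rewrite ler_nat.
rewrite /mx; case: (leP (psiN m y) 0) => h //; have := psiN_ge0 m y; lra.
Qed.

Lemma psi_eq n y : y <= n%:R -> psi y = psiN n y.
Proof.
move=> yn; rewrite /psi.
have ym : y <= (Num.truncn y).+1%:R by apply/ltW; exact: truncnS_gt.
case: (leqP n (Num.truncn y).+1) => h.
  exact: psiN_stable.
by rewrite (psiN_stable (n:=n) ym (ltnW h)).
Qed.

Lemma psi_lip y z : y <= z -> psi y <= psi z <= psi y + (z - y).
Proof.
move=> yz.
pose n := (Num.truncn z).+1.
have zn : z <= n%:R by apply/ltW; exact: truncnS_gt.
rewrite (psi_eq (le_trans yz zn)) (psi_eq zn); exact: psiN_lip.
Qed.

Lemma psi_ge0 y : 0 <= psi y.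
Proof. exact: psiN_ge0. Qed.

Lemma psi_small y : y <= 1 -> psi y = 0.
Proof.
move=> y1; rewrite (psi_eq (n := 1)) //= /mx /term.
case: (leP y (t 0)%:R) => h1; first by rewrite lexx.
case: (leP (y - (t 0)%:R) 0%:R) => h2; last by rewrite lexx.
lra.
Qed.

Lemma psiN_ge_term n k y : (k < n)%N -> term k y <= psiN n y.
Proof.
elim: n => [//|n IH]; rewrite ltnS leq_eqVlt => /orP[/eqP ->|kn] /=; rewrite /mx.
  case: (leP (psiN n y) (term n y)) => h //; lra.
have := IH kn; case: (leP (psiN n y) (term n y)) => h //; lra.
Qed.

Lemma psiN_le_sum n y :
  psiN n y <= \sum_(k < n) (if (t k)%:R < y then k%:R else 0).
Proof.
elim: n => [|n IH]; first by rewrite big_ord0.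
rewrite big_ord_recr /=.
have h1 := term_le n y; have h2 := term_ge0 n y; have h0 := psiN_ge0 n y.
apply: (le_trans (_ : _ <= psiN n y + term n y)).
  rewrite /mx; case: (leP (psiN n y) (term n y)) => h; lra.
exact: lerD.
Qed.

Lemma psi_cvgy : psi x @[x --> +oo] --> +oo.
Proof.
apply/cvgryPge => A.
pose k := (Num.truncn A).+1.
have Ak : A <= k%:R by apply/ltW; exact: truncnS_gt.
near=> y.
have hy : ((t k)%:R + k%:R <= y).
  near: y; exact: nbhs_pinfty_ge.
pose n := maxn (Num.truncn y).+1 k.+1.
have yn : y <= n%:R.
  apply: (le_trans (ltW (truncnS_gt y))); rewrite ler_nat; exact: leq_maxl.
rewrite (psi_eq yn); apply: (le_trans Ak); apply: (le_trans _ (psiN_ge_term (k:=k) y _)); last first.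
  by rewrite /n; apply: (leq_trans _ (leq_maxr _ _)).
rewrite /term; case: (leP y (t k)%:R) => h1.
  have : (0 : R) < k%:R by rewrite ltr0n.
  lra.
case: (leP (y - (t k)%:R) k%:R) => h2; lra.
Unshelve. all: by end_near.
Qed.

End PsiCons.

Section PsiGen.
Variable R : realType.
Notation mu := (@lebesgue_measure R).
Variable psi : R -> R.
Hypothesis ps0 : forall y, 0 <= psi y.
Hypothesis plip : forall y z, y <= z -> psi y <= psi z <= psi y + (z - y).
Hypothesis psmall : forall y, y <= 1 -> psi y = 0.

Lemma psi_norm y z : `|psi y - psi z| <= `|y - z|.
Proof.
case: (leP y z) => h.
  have /andP[h1 h2] := plip h.
  have -> : `|psi y - psi z| = psi z - psi y by rewrite ler0_norm ?opprB //; lra.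
  have -> : `|y - z| = z - y by rewrite ler0_norm ?opprB //; lra.
  lra.
have /andP[h1 h2] := plip (ltW h).
have -> : `|psi y - psi z| = psi y - psi z by rewrite ger0_norm //; lra.
have -> : `|y - z| = y - z by rewrite ger0_norm //; lra.
lra.
Qed.

Lemma cont_psi : continuous psi.
Proof.
move=> x; apply/cvgrPdist_le => /= e e0; near=> y.
apply: (le_trans (psi_norm x y)).
near: y; exists e => // z /=; rewrite /ball_ /= => h; exact: ltW.
Unshelve. all: by end_near.
Qed.

Lemma int_psi a b : mu.-integrable `[a, b] (EFin \o psi).
Proof.
apply: continuous_compact_integrable; first exact: segment_compact.
by apply: continuous_subspaceT => x; exact: cont_psi.
Qed.

Lemma int_oc (g : R -> R) a b : continuous g -> mu.-integrable `]a, b] (EFin \o g).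
Proof.
move=> cg; apply: (@integrableS _ _ _ mu `[a, b]) => //; first exact: subset_itv_oc_cc.
apply: continuous_compact_integrable; first exact: segment_compact.
by apply: continuous_subspaceT => x; exact: cg.
Qed.

Let Psi := Psi_of psi.

Lemma Psi_diff a b : 0 <= a -> a <= b ->
  Psi b - Psi a = \int[mu]_(x in `]a, b]) psi x.
Proof.
move=> a0 ab; rewrite /Psi /Psi_of.
by rewrite (@Rintegral_itvB _ psi (BLeft 0) (BRight b) a) ?bnd_simp //; exact: int_psi.
Qed.

Lemma itv_bounds a b : a <= b ->
  psi a * (b - a) <= \int[mu]_(x in `]a, b]) psi x <= psi b * (b - a).
Proof.
rewrite le_eqVlt => /predU1P[<-|ab].
  rewrite set_itv_ge ?bnd_simp ?ltxx // Rintegral_set0 subrr !mulr0 lexx //.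
have iab : mu.-integrable `]a, b] (EFin \o psi).
  by apply: integrableS (int_psi a b) => //; exact: subset_itv_oc_cc.
have mab : fine (mu `]a, b]) = b - a.
  by rewrite lebesgue_measure_itv /= lte_fin ab.
apply/andP; split.
  rewrite -mab -Rintegral_cst //; apply: le_Rintegral => //.
    exact: int_oc (@cst_continuous _ _ _).
  move=> x /=; rewrite in_itv /= => /andP[h1 h2].
  by have /andP[] := plip (ltW h1).
rewrite -mab mulrC -[X in _ <= X]mulrC -Rintegral_cst //; apply: le_Rintegral => //.
  exact: int_oc (@cst_continuous _ _ _).
move=> x /=; rewrite in_itv /= => /andP[h1 h2].
by have /andP[] := plip h2.
Qed.

Lemma Psi0 : Psi 0 = 0.
Proof. by rewrite /Psi /Psi_of set_itv1 Rintegral_set1. Qed.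

Lemma Psi_neg y : y < 0 -> Psi y = 0.
Proof.
move=> y0; rewrite /Psi /Psi_of set_itv_ge ?Rintegral_set0 // bnd_simp; apply/negP => h; lra.
Qed.

Lemma Psi_step a b : 0 <= a -> a <= b ->
  psi a * (b - a) <= Psi b - Psi a <= psi b * (b - a).
Proof. by move=> a0 ab; rewrite Psi_diff //; exact: itv_bounds. Qed.

Lemma Psi_ge0 y : 0 <= y -> 0 <= Psi y.
Proof.
move=> y0; have /andP[h1 _] := Psi_step (lexx 0) y0.
rewrite Psi0 subr0 in h1; have : 0 <= psi 0 * (y - 0) by apply: mulr_ge0 => //; lra.
move: h1; rewrite subr0 /=; lra.
Qed.

Lemma Psi_mono a b : 0 <= a -> a <= b -> Psi a <= Psi b.
Proof.
move=> a0 ab; have /andP[h1 _] := Psi_step a0 ab.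
have : 0 <= psi a * (b - a) by apply: mulr_ge0 => //; lra.
lra.
Qed.

Lemma Psi_le y : 0 <= y -> Psi y <= y * psi y.
Proof.
move=> y0; have /andP[_ h2] := Psi_step (lexx 0) y0.
by rewrite Psi0 !subr0 mulrC in h2.
Qed.

Lemma Psi_small y : y <= 1 -> Psi y = 0.
Proof.
move=> y1; case: (ltP y 0) => y0; first exact: Psi_neg.
have /andP[h1 h2] := Psi_step (lexx 0) y0.
rewrite Psi0 (psmall (y:=0)) // (psmall y1) !mul0r !subr0 in h1 h2; lra.
Qed.

Lemma psi_le_Psi b : 0 <= b -> psi b <= Psi b + 1.
Proof.
move=> b0; have := Psi_ge0 b0.
case: (leP b 1) => b1; first by rewrite psmall //; lra.
have hb0 : 0 <= b - 1 by lra.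
have hb1 : b - 1 <= b by lra.
have /andP[h1 _] := Psi_step hb0 hb1.
have /andP[h3 h4] := plip hb1.
have := Psi_ge0 hb0.
have e1 : b - (b - 1) = 1 by lra.
move: h1; rewrite e1 mulr1 => *; lra.
Qed.

Lemma Psi_deriv x : 0 < x -> derivable Psi x 1.
Proof.
move=> x0.
have h : x < x + 1 by lra.
have [] := continuous_FTC1_closed h (int_psi 0 (x + 1)) x0 (@cont_psi x).
done.
Qed.

Lemma Psi_cont : continuous Psi.
Proof.
move=> x; case: (ltP x 1) => x1.
  rewrite /prop_for /continuous_at.
  have -> : Psi x = 0 by apply: Psi_small; exact: ltW.
  apply: cvg_near_cst; near=> y; apply: Psi_small; apply: ltW.
  near: y; exact: lt_nbhsl.
apply: differentiable_continuous; apply/derivable1_diffP; apply: Psi_deriv; lra.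
Unshelve. all: by end_near.
Qed.

Let F := F_of psi.

Lemma F_ge0 y : 0 <= y -> 0 <= F y.
Proof. move=> y0; apply: Psi_ge0; apply: ln_ge0; lra. Qed.

Lemma F_mono y z : 0 <= y -> y <= z -> F y <= F z.
Proof.
move=> y0 yz; apply: Psi_mono; first (apply: ln_ge0; lra).
rewrite ler_ln ?posrE; lra.
Qed.

Lemma F_deriv y : 0 < y -> derivable F y 1.
Proof.
move=> y0; apply/derivable1_diffP.
have -> : F = Psi \o ((@ln R) \o (fun x => 1 + x)) by [].
rewrite -/Psi.
apply: differentiable_comp; last first.
  apply/derivable1_diffP; apply: Psi_deriv => /=; apply: ln_gt0; lra.
apply: differentiable_comp => /=.
  by apply: differentiableD.
apply/derivable1_diffP; apply: ex_derive; apply: is_derive1_ln; lra.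
Qed.

Lemma F_right0 : cvg ((fun h => h^-1 * (F h - F 0)) x @[x --> 0^'+]).
Proof.
apply/cvg_ex; exists 0; apply: cvg_near_cst.
near=> h.
have h0 : 0 < h by near: h; exact: nbhs_right_gt.
have h1 : h < 1 by near: h; apply: nbhs_right_lt; lra.
have -> : F 0 = 0 by rewrite /F /F_of addr0 ln1; exact: Psi0.
have -> : F h = 0.
  apply: Psi_small; apply: (le_trans (le_ln1Dx _)); lra.
by rewrite subr0 mulr0.
Unshelve. all: by end_near.
Qed.

Lemma F_sub_aux y y' : 0 <= y' -> y' <= y -> F (y + y') <= F y + F y' + 2.
Proof.
move=> y'0 yy'.
rewrite /F /F_of.
set a := ln (1 + y); set b := ln (1 + y'); set s := ln (1 + (y + y')).
have y0 : 0 <= y by lra.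
have b0 : 0 <= b by apply: ln_ge0; lra.
have a0 : 0 <= a by apply: ln_ge0; lra.
have ba : b <= s by rewrite /b /s ler_ln ?posrE; lra.
have as_ : a <= s by rewrite /a /s ler_ln ?posrE; lra.
pose u := y' / (1 + y); pose v := y / (1 + y').
have sa : s - a <= u.
  have e : 1 + (y + y') = (1 + y) * (1 + u) by rewrite /u; field; lra.
  rewrite /s e.
  have p1 : 0 < 1 + y by lra.
  have u0 : 0 <= u by apply: divr_ge0; lra.
  have p2 : 0 < 1 + u by lra.
  rewrite /a lnM ?posrE //.
  rewrite addrC addKr; apply: le_ln1Dx; lra.
have sb : s - b <= v.
  have e : 1 + (y + y') = (1 + y') * (1 + v) by rewrite /v; field; lra.
  rewrite /s e.
  have p1 : 0 < 1 + y' by lra.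
  have v0 : 0 <= v by apply: divr_ge0; lra.
  have p2 : 0 < 1 + v by lra.
  rewrite /b lnM ?posrE //.
  rewrite addrC addKr; apply: le_ln1Dx; lra.
have u1 : u <= 1 by rewrite /u ler_pdivrMr; lra.
have uv : u * v <= 1.
  have -> : u * v = (y * y') / ((1 + y) * (1 + y')) by rewrite /u /v; field; lra.
  rewrite ler_pdivrMr; [nra|nra].
have /andP[_ h1] := Psi_step a0 as_.
have /andP[_ h2] := plip ba.
have h3 := psi_le_Psi b0.
have h4 : (s - b) * (s - a) <= 1.
  apply: (le_trans _ uv); rewrite mulrC; apply: ler_pM; lra.
have h5 : psi s * (s - a) <= psi b * (s - a) + (s - b) * (s - a).
  rewrite -mulrDl; apply: ler_wpM2r; lra.
have h6 : psi b * (s - a) <= psi b.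
  apply: ler_piMr => //; lra.
rewrite -/Psi; lra.
Qed.

Lemma F_sub y y' : 0 <= y -> 0 <= y' -> F (y + y') <= F y + F y' + 2.
Proof.
move=> y0 y'0; case: (leP y' y) => h; first exact: F_sub_aux.
rewrite addrC [F y + _]addrC; apply: F_sub_aux => //; lra.
Qed.

End PsiGen.

Section Tail.
Context d (X : measurableType d) (R : realType) (xi : {measure set X -> \bar R}).
Variable f : X -> R.
Hypothesis f_ge0 : forall x, 0 <= f x.
Hypothesis f_int : xi.-integrable setT (fun x => (f x)%:E).

Definition B (n : nat) := [set x | n%:R < f x].
Definition fn (n : nat) (x : X) : \bar R := ((f \_ (B n)) x)%:E.

Lemma mf : measurable_fun setT f.
Proof. by have /integrableP[/measurable_EFinP mf _] := f_int. Qed.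

Lemma mB n : measurable (B n).
Proof.
have := mf measurableT (measurable_itv `]n%:R, +oo[).
rewrite setTI; congr measurable; apply/seteqP; split => x /=;
  by rewrite /B /= in_itv /= andbT.
Qed.

Lemma mfn n : measurable_fun setT (fn n).
Proof.
apply/measurable_EFinP; apply/(measurable_restrictT _ _).1; first exact: mB.
exact: measurable_funS mf.
Qed.


Lemma inB n x : (x \in B n) = (n%:R < f x).
Proof.
case: (ltP (n%:R : R) (f x)) => h; first by rewrite mem_set.
by rewrite memNset //= /B /=; apply/negP; rewrite -leNgt.
Qed.

Lemma fnE n x : fn n x = (if n%:R < f x then f x else 0)%:E.
Proof. by rewrite /fn patchE inB. Qed.

Lemma fn_ge0 n x : (0 <= fn n x)%E.
Proof. by rewrite fnE lee_fin; case: ifP. Qed.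

Lemma fn_anti m n x : (m <= n)%N -> (fn n x <= fn m x)%E.
Proof.
move=> mn; rewrite !fnE lee_fin.
have : (m%:R : R) <= n%:R by rewrite ler_nat.
have := f_ge0 x.
case: (ltP (n%:R : R) (f x)) => hn; case: (ltP (m%:R : R) (f x)) => hm //; lra.
Qed.

Lemma tail e : 0 < e -> exists n : nat, (\int[xi]_x fn n x <= e%:E)%E.
Proof.
move=> e0.
have ff : {ae xi, forall x, setT x -> fn ^~ x @ \oo --> (cst 0%E x)}.
  apply: aeW => x _; apply: cvg_near_cst.
  exists (Num.truncn (f x)).+1 => // n /= hn.
  rewrite fnE ifF //; apply/negbTE; rewrite -leNgt.
  apply: (le_trans (ltW (truncnS_gt (f x)))); by rewrite ler_nat.
have fg : {ae xi, forall x n, setT x -> (`|fn n x| <= (EFin \o f) x)%E}.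
  apply: aeW => x n _; rewrite fnE /= lee_fin; have := f_ge0 x.
  by case: ifP => _ h; rewrite ?ger0_norm // normr0.
have [_ _ h] := @dominated_convergence _ _ _ xi setT measurableT fn (cst 0%E)
  (EFin \o f) mfn (measurable_cst _) ff f_int fg.
rewrite integral0 in h.
move/fine_cvgP : h => [hfin hc].
have hle := cvgr_dist_le _ _ hc _ e0.
near \oo => N.
exists N.
have h1 : (\int[xi]_x fn N x)%E \is a fin_num by near: N; exact: hfin.
have h2 : `|0 - fine (\int[xi]_x fn N x)%E| <= e by near: N; apply: hle.
rewrite -(fineK h1) lee_fin.
move: h2; rewrite sub0r normrN; apply: le_trans; exact: ler_norm.
Unshelve. all: by end_near.
Qed.

End Tail.

Theorem theorem3p5 (d : measure_display) (X : measurableType d) (R : realType)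
  (xi : probability X R) (f : X -> R)
  (f_ge0 : forall x, 0 <= f x)
  (f_int : xi.-integrable setT (fun x => (f x)%:E)) :
  exists psi : R -> R,
    [/\ (forall y, 0 <= y -> 0 <= psi y),
        (forall y z, 0 <= y -> y <= z -> psi y <= psi z),
        (forall y z, 0 <= y -> 0 <= z -> `|psi y - psi z| <= `|y - z|),
        psi x @[x --> +oo] --> +oo &
        xi.-integrable setT (fun x => (Psi_of psi (f x))%:E)] /\
    [/\ (forall y, 0 <= y -> 0 <= F_of psi y),
        (forall y z, 0 <= y -> y <= z -> F_of psi y <= F_of psi z),
        (forall y, 0 < y -> derivable (F_of psi) y 1),
        cvg ((fun h => h^-1 * (F_of psi h - F_of psi 0)) x @[x --> 0^'+]) &
        exists M : R, 0 < M /\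
          forall y y', 0 <= y -> 0 <= y' ->
            F_of psi (y + y') <= F_of psi y + F_of psi y' + M].
Proof.
pose e (k : nat) : R := ((2 ^ k.+1)%:R)^-1 / k.+1%:R.
have e0 k : 0 < e k by rewrite /e divr_gt0 // invr_gt0 ltr0n expn_gt0.
have [nk Hnk] := choice (fun k => tail f_ge0 f_int (e0 k)).
pose t k := maxn (nk k) k.
have tk k : (k <= t k)%N by exact: leq_maxr.
pose p := @psi R t.
have ps0 : forall y, 0 <= p y by move=> y; exact: psi_ge0.
have plip : forall y z, y <= z -> p y <= p z <= p y + (z - y).
  by move=> y z; exact: psi_lip.
have psmall : forall y, y <= 1 -> p y = 0 by move=> y; exact: psi_small.
exists p; split; last first.
  split.
  - by move=> y; exact: F_ge0.
  - by move=> y z; exact: F_mono.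
  - by move=> y; exact: F_deriv.
  - exact: F_right0.
  - by exists 2; split => // y y' y0 y'0; exact: F_sub.
split.
- by move=> y _; exact: ps0.
- by move=> y z _ yz; have /andP[] := plip _ _ yz.
- by move=> y z _ _; exact: psi_norm.
- exact: psi_cvgy.
pose G (k : nat) (x : X) := ((k%:R)%:E * fn f (t k) x)%E.
have mG k : measurable_fun setT (G k) by apply: measurable_funeM; exact: (mfn f_int).
have G0 k x : (0 <= G k x)%E by apply: mule_ge0; [rewrite lee_fin|exact: fn_ge0].
have key x : (`|(Psi_of p (f x))%:E| <= \sum_(k <oo) G k x)%E.
  rewrite gee0_abs ?lee_fin; last exact: Psi_ge0.
  apply: (le_trans (_ : _ <= (f x * p (f x))%:E)%E).
    by rewrite lee_fin; exact: Psi_le.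
  pose N := (Num.truncn (f x)).+1.
  have fN : f x <= N%:R by apply/ltW; exact: truncnS_gt.
  rewrite /p (psi_eq tk fN).
  apply: (le_trans (_ : _ <= \sum_(0 <= k < N) G k x)%E); last first.
    by apply: nneseries_lim_ge => k _ _; exact: G0.
  rewrite big_mkord.
  under eq_bigr do rewrite /G fnE -EFinM.
  rewrite sumEFin lee_fin.
  apply: (le_trans (ler_wpM2l (f_ge0 x) (psiN_le_sum t N (f x)))).
  rewrite mulr_sumr; apply: ler_sum => k _.
  by case: ifP => _; rewrite ?mulr0 // mulrC.
apply/integrableP; split.
  apply/measurable_EFinP; apply: measurableT_comp; last exact: mf f_int.
  apply: continuous_measurable_fun; exact: (Psi_cont plip psmall).
apply: (@le_lt_trans _ _ (\int[xi]_x \sum_(k <oo) G k x)%E).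
  apply: ge0_le_integral => //.
    apply: measurableT_comp => //.
    apply/measurable_EFinP; apply: measurableT_comp; last exact: mf f_int.
    apply: continuous_measurable_fun; exact: (Psi_cont plip psmall).
  exact: ge0_emeasurable_sum.
rewrite integral_nneseries //.
apply: (@le_lt_trans _ _ 1%:E); last exact: ltey.
have eps := @epsilon_trick0 R 1 xpredT ler01.
apply: (le_trans _ eps).
apply: lee_nneseries.
  by move=> k _ _; apply: integral_ge0 => x _; exact: G0.
move=> k _.
rewrite /G ge0_integralZl_EFin //; last 2 first.
  by move=> x _; exact: fn_ge0.
  exact: (mfn f_int).
have h1 : (\int[xi]_x fn f (t k) x <= (e k)%:E)%E.
  apply: (le_trans _ (Hnk k)); apply: ge0_le_integral => //.
  - by move=> x _; exact: fn_ge0.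
  - exact: (mfn f_int).
  - exact: (mfn f_int).
  - by move=> x _; apply: (fn_anti f_ge0); exact: leq_maxl.
apply: (le_trans (lee_wpmul2l _ h1)); first by rewrite lee_fin.
rewrite -EFinM lee_fin /e.
have hk : (k%:R : R) / k.+1%:R <= 1 by rewrite ler_pdivrMr // mul1r ler_nat.
rewrite div1r mulrCA -[X in _ <= X]mulr1; apply: ler_wpM2l => //.
Qed.
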